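(* For any connected graphs $G$ and $H$, $\gamma_P(G \Box H) \le \min\{\gamma(G)Z(H),\ \gamma(H)Z(G)\}$.
   Context: $\gamma(G)$ is the domination number (minimum size of $D\subseteq V(G)$ with $N[D]=V(G)$). Zero forcing: starting from an observed set $Z$, repeatedly any vertex that is the only unobserved neighbor of some observed vertex becomes observed; $Z(G)$ is the minimum size of a set that eventually observes all vertices. Power domination: for $S\subseteq V(G)$, first all vertices of $S$ and their neighbors are observed, then the zero forcing rule is applied repeatedly; $\gamma_P(G)$ is the minimum size of an $S$ that eventually observes all vertices. $G\Box H$ is the Cartesian product: vertex set $V(G)\times V(H)$, with $(g_1,h_1)\sim(g_2,h_2)$ iff ($g_1=g_2$ and $h_1h_2\in E(H)$) or ($h_1=h_2$ and $g_1g_2\in E(G)$). *)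

(* Defs.v *)
From mathcomp Require Import all_boot.
Set Implicit Arguments. Unset Strict Implicit. Unset Printing Implicit Defensive.

Definition simple_graph (T : finType) (e : rel T) : Prop :=
  symmetric e /\ irreflexive e.

Definition connected (T : finType) (e : rel T) : Prop :=
  0 < #|T| /\ forall x y : T, connect e x y.

Definition closed_nbhd (T : finType) (e : rel T) (D : {set T}) : {set T} :=
  D :|: [set y | [exists x in D, e x y]].

Definition dominating (T : finType) (e : rel T) (D : {set T}) : Prop :=
  closed_nbhd e D = setT.

Inductive zf_observed (T : finType) (e : rel T) (S : {set T}) : T -> Prop :=
  | zf_init x : x \in S -> zf_observed e S x
  | zf_force v w : zf_observed e S v -> e v w ->
      (forall u, e v u -> u <> w -> zf_observed e S u) ->
      zf_observed e S w.

Definition zero_forcing_set (T : finType) (e : rel T) (S : {set T}) : Prop :=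
  forall x, zf_observed e S x.

Definition power_dominating_set (T : finType) (e : rel T) (S : {set T}) : Prop :=
  forall x, zf_observed e (closed_nbhd e S) x.

(* Graph parameters as minima (they exist: setT works, as a minimum over
   a nonempty predicate on 'I_#|T|.+1). *)
Definition is_min_card (T : finType) (P : {set T} -> Prop) (k : nat) : Prop :=
  (exists S, P S /\ #|S| = k) /\ (forall S, P S -> k <= #|S|).

Definition domination_number (T : finType) (e : rel T) (k : nat) : Prop :=
  is_min_card (dominating e) k.
Definition zero_forcing_number (T : finType) (e : rel T) (k : nat) : Prop :=
  is_min_card (zero_forcing_set e) k.
Definition power_domination_number (T : finType) (e : rel T) (k : nat) : Prop :=
  is_min_card (power_dominating_set e) k.

Definition cart_prod (T1 T2 : finType) (e1 : rel T1) (e2 : rel T2) : rel (T1 * T2) :=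
  fun p q => ((p.1 == q.1) && e2 p.2 q.2) || ((p.2 == q.2) && e1 p.1 q.1).

(* Main.v *)
Require Import Defs.
From mathcomp Require Import all_boot.

Lemma zf_mono (T : finType) (e : rel T) (A B : {set T}) :
  A \subset B -> forall x, zf_observed e A x -> zf_observed e B x.
Proof.
move=> AB x H; induction H as [x Hx|v w Hv IHv evw Ho IHo].
- by apply: zf_init; apply: (subsetP AB).
- by apply: (zf_force IHv evw) => u eu nu; apply: IHo.
Qed.

Lemma layer1 (T1 T2 : finType) (e1 : rel T1) (e2 : rel T2) (Z : {set T2}) y :
  zf_observed e2 Z y -> forall g,
  zf_observed (cart_prod e1 e2) (setX [set: T1] Z) (g, y).
Proof.
move=> H; induction H as [x Hx|v w Hv IHv evw Ho IHo] => g.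
- by apply: zf_init; rewrite !inE /= Hx.
- apply: (zf_force (IHv g)); first by rewrite /cart_prod /= eqxx evw.
  move=> [u1 u2]; rewrite /cart_prod /= => /orP [/andP [/eqP <- eu] | /andP [/eqP <- _]] nu.
  + apply: IHo => // E; apply: nu; by rewrite E.
  + exact: IHv.
Qed.

Lemma layer2 (T1 T2 : finType) (e1 : rel T1) (e2 : rel T2) (Z : {set T1}) y :
  zf_observed e1 Z y -> forall h,
  zf_observed (cart_prod e1 e2) (setX Z [set: T2]) (y, h).
Proof.
move=> H; induction H as [x Hx|v w Hv IHv evw Ho IHo] => h.
- by apply: zf_init; rewrite !inE /= Hx.
- apply: (zf_force (IHv h)); first by rewrite /cart_prod /= eqxx evw orbT.
  move=> [u1 u2]; rewrite /cart_prod /= => /orP [/andP [/eqP <- _] | /andP [/eqP <- eu]] nu.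
  + exact: IHv.
  + apply: IHo => // E; apply: nu; by rewrite E.
Qed.

Theorem lemma3p8 (T1 T2 : finType) (e1 : rel T1) (e2 : rel T2)
  (gG zG gH zH gP : nat) :
  simple_graph e1 -> simple_graph e2 ->
  connected e1 -> connected e2 ->
  domination_number e1 gG -> zero_forcing_number e1 zG ->
  domination_number e2 gH -> zero_forcing_number e2 zH ->
  power_domination_number (cart_prod e1 e2) gP ->
  gP <= minn (gG * zH) (gH * zG).
Proof.
move=> _ _ _ _ [[D1 [HD1 <-]] _] [[Z1 [HZ1 <-]] _] [[D2 [HD2 <-]] _]
  [[Z2 [HZ2 <-]] _] [_ Hmin].
rewrite leq_min; apply/andP; split.
- rewrite -cardsX; apply: Hmin => [[x y]].
  apply: (@zf_mono _ _ (setX [set: T1] Z2)); last exact: layer1.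
  apply/subsetP => [[g z]]; rewrite !inE /= => Hz.
  have : g \in closed_nbhd e1 D1 by rewrite HD1 in_setT.
  rewrite /closed_nbhd !inE => /orP [gD | /existsP [d /andP [dD edg]]].
  + by rewrite gD Hz.
  + apply/orP; right; apply/existsP; exists (d, z).
    by rewrite !inE dD Hz /cart_prod /= eqxx edg orbT.
- rewrite mulnC -cardsX; apply: Hmin => [[x y]].
  apply: (@zf_mono _ _ (setX Z1 [set: T2])); last exact: layer2.
  apply/subsetP => [[z h]]; rewrite !inE /= andbT => Hz.
  have : h \in closed_nbhd e2 D2 by rewrite HD2 in_setT.
  rewrite /closed_nbhd !inE => /orP [hD | /existsP [d /andP [dD edh]]].
  + by rewrite hD Hz.
  + apply/orP; right; apply/existsP; exists (z, d).
    by rewrite !inE dD Hz /cart_prod /= eqxx edh.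
Qed.
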